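(* Let $n\in\mathbb Z_{>0}$, let $W:=V^{\oplus n}$ and $W_*:=V_*^{\oplus n}$ with the pairing $\langle (v_i),(w_i)\rangle=\sum_i\langle v_i,w_i\rangle$, and let $\varphi:\mathfrak{gl}(V,V_* )\to\mathfrak{gl}(W,W_* )$ be the $n$-fold diagonal map $A\mapsto \mathrm{diag}(A,\dots,A)$. Then the normalizer of $\varphi(\mathfrak{sl}(V,V_* ))$ in $\mathfrak{gl}(W,W_* )$ equals $\varphi(\mathfrak{gl}(V,V_* ))$. Moreover, if $V_*$ is identified with $V$ so that the pairing becomes a nondegenerate symmetric (resp. antisymmetric) form on $V$, then $\varphi(\mathfrak{so}(V))$ (resp. $\varphi(\mathfrak{sp}(V))$) is self-normalizing in $\mathfrak{gl}(W,W_* )$.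
   Context: Ground field $\mathbb C$. $V,V_*$ are countable-dimensional with nondegenerate pairing $\langle\cdot,\cdot\rangle$. $\mathfrak{gl}(V,V_* )$ is the Lie algebra of the associative algebra $V\otimes V_*$ with $(v\otimes w)(v'\otimes w')=\langle v',w\rangle v\otimes w'$; $\mathfrak{sl}(V,V_* )=[\mathfrak{gl}(V,V_* ),\mathfrak{gl}(V,V_* )]$ (the kernel of the trace $v\otimes w\mapsto\langle v,w\rangle$). Given a nondegenerate symmetric form on $V$, $\mathfrak{so}(V)$ denotes the subalgebra $\bigwedge^2V\subset\mathfrak{gl}(V,V)$ (spanned by $v\otimes w-w\otimes v$); given a nondegenerate antisymmetric form, $\mathfrak{sp}(V)$ denotes the subalgebra $\mathrm{Sym}^2V\subset\mathfrak{gl}(V,V)$ (spanned by $v\otimes w+w\otimes v$). Elements of $\mathfrak{gl}(W,W_* )$ are viewed as $n\times n$ block matrices with entries in $\mathfrak{gl}(V,V_* )$. *)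

(* Defs.v *)
From HB Require Import structures.
From mathcomp Require Import all_boot all_order all_algebra.
Unset Printing Implicit Defensive.
Import GRing.Theory.
Local Open Scope ring_scope.

Section Defs.
Context {K : fieldType}.

Definition bilinear_pairing {U Us : lmodType K} (p : U -> Us -> K) : Prop :=
  (forall a x y w, p (a *: x + y) w = a * p x w + p y w) /\
  (forall a v w z, p v (a *: w + z) = a * p v w + p v z).

Definition nondeg_pairing {U Us : lmodType K} (p : U -> Us -> K) : Prop :=
  (forall v, (forall w, p v w = 0) -> v = 0) /\
  (forall w, (forall v, p v w = 0) -> w = 0).

Definition nat_basis {U : lmodType K} (e : nat -> U) : Prop :=
  (forall k (c : 'I_k -> K), \sum_(i < k) c i *: e i = 0 -> forall i, c i = 0) /\
  (forall v, exists k (c : 'I_k -> K), v = \sum_(i < k) c i *: e i).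

Definition countable_dim (U : lmodType K) : Prop := exists e : nat -> U, nat_basis e.

(* the operator x |-> sum_i <x, ws i> vs i, i.e. the action of
   sum_i vs i (x) ws i in U (x) Us on U *)
Definition tensor_op {U Us : lmodType K} (p : U -> Us -> K) {k : nat}
  (vs : 'I_k -> U) (ws : 'I_k -> Us) : U -> U :=
  fun x => \sum_(i < k) p x (ws i) *: vs i.

(* A in gl(U, Us) = U (x) Us *)
Definition in_gl {U Us : lmodType K} (p : U -> Us -> K) (A : U -> U) : Prop :=
  exists k (vs : 'I_k -> U) (ws : 'I_k -> Us),
    forall x, A x = tensor_op p vs ws x.

(* A in sl(U, Us) = kernel of the trace  v (x) w |-> <v, w> *)
Definition in_sl {U Us : lmodType K} (p : U -> Us -> K) (A : U -> U) : Prop :=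
  exists k (vs : 'I_k -> U) (ws : 'I_k -> Us),
    (forall x, A x = tensor_op p vs ws x) /\ \sum_(i < k) p (vs i) (ws i) = 0.

(* so(U) = /\^2 U, spanned by v (x) w - w (x) v, for a form b on U *)
Definition in_so {U : lmodType K} (b : U -> U -> K) (A : U -> U) : Prop :=
  exists k (vs ws : 'I_k -> U),
    forall x, A x = \sum_(i < k) (b x (ws i) *: vs i - b x (vs i) *: ws i).

(* sp(U) = Sym^2 U, spanned by v (x) w + w (x) v *)
Definition in_sp {U : lmodType K} (b : U -> U -> K) (A : U -> U) : Prop :=
  exists k (vs ws : 'I_k -> U),
    forall x, A x = \sum_(i < k) (b x (ws i) *: vs i + b x (vs i) *: ws i).

Definition lie_br {U : lmodType K} (A B : U -> U) : U -> U :=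
  fun x => A (B x) - B (A x).

Definition diag_op {U : lmodType K} (n : nat) (A : U -> U) :
  {ffun 'I_n -> U} -> {ffun 'I_n -> U} :=
  fun x => [ffun i => A (x i)].

Definition pairingW {U Us : lmodType K} (n : nat) (p : U -> Us -> K)
  (x : {ffun 'I_n -> U}) (y : {ffun 'I_n -> Us}) : K :=
  \sum_(i < n) p (x i) (y i).

Definition in_diag_img {U : lmodType K} (n : nat) (P : (U -> U) -> Prop)
  (X : {ffun 'I_n -> U} -> {ffun 'I_n -> U}) : Prop :=
  exists A, P A /\ forall x, X x = diag_op n A x.

Definition normalizes {U : lmodType K} (n : nat) (P : (U -> U) -> Prop)
  (X : {ffun 'I_n -> U} -> {ffun 'I_n -> U}) : Prop :=
  forall A, P A -> in_diag_img n P (lie_br X (diag_op n A)).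

End Defs.

(* Main.v *)
Require Import Defs.
From HB Require Import structures.
From mathcomp Require Import all_boot all_order all_algebra.
Import GRing.Theory Num.Theory.
Local Open Scope ring_scope.

Section Basic.
Variable K : numFieldType.
Variables (V Vs : lmodType K) (p : V -> Vs -> K).
Hypothesis hp : bilinear_pairing p.

Lemma pD1 x y w : p (x + y) w = p x w + p y w.
Proof. by have := hp.1 1 x y w; rewrite scale1r mul1r. Qed.
Lemma p01 w : p 0 w = 0.
Proof. by have := pD1 0 0 w; rewrite addr0 -{1}[p 0 w]addr0 => /addrI ->. Qed.
Lemma pZ1 a x w : p (a *: x) w = a * p x w.
Proof. by have := hp.1 a x 0 w; rewrite addr0 p01 addr0. Qed.
Lemma pN1 x w : p (- x) w = - p x w.
Proof. by rewrite -scaleN1r pZ1 mulN1r. Qed.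
Lemma pB1 x y w : p (x - y) w = p x w - p y w.
Proof. by rewrite pD1 pN1. Qed.
Lemma psum1 (I : Type) (r : seq I) (P : pred I) (F : I -> V) w :
  p (\sum_(i <- r | P i) F i) w = \sum_(i <- r | P i) p (F i) w.
Proof. by apply: (big_morph (fun x => p x w)); [exact: (fun x y => pD1 x y w)|exact: p01]. Qed.

Lemma pD2 x y w : p w (x + y) = p w x + p w y.
Proof. by have := hp.2 1 w x y; rewrite scale1r mul1r. Qed.
Lemma p02 w : p w 0 = 0.
Proof. by have := pD2 0 0 w; rewrite addr0 -{1}[p w 0]addr0 => /addrI ->. Qed.
Lemma pZ2 a x w : p w (a *: x) = a * p w x.
Proof. by have := hp.2 a w x 0; rewrite addr0 p02 addr0. Qed.
Lemma pN2 x w : p w (- x) = - p w x.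
Proof. by rewrite -scaleN1r pZ2 mulN1r. Qed.
Lemma pB2 x y w : p w (x - y) = p w x - p w y.
Proof. by rewrite pD2 pN2. Qed.
Lemma psum2 (I : Type) (r : seq I) (P : pred I) (F : I -> Vs) w :
  p w (\sum_(i <- r | P i) F i) = \sum_(i <- r | P i) p w (F i).
Proof. by apply: (big_morph (fun x => p w x)); [exact: (fun x y => pD2 x y w)|exact: p02]. Qed.

Lemma kernel_exists (e : nat -> V) : nat_basis e -> forall zs : seq Vs,
  exists a, a != 0 /\ forall z, z \in zs -> p a z = 0.
Proof.
move=> [hind _] zs; set m := size zs.
pose M : 'M[K]_(m.+1, m) := \matrix_(i, j) p (e i) (nth 0 zs j).
have : kermx M != 0.
  rewrite -mxrank_eq0 mxrank_ker -lt0n subn_gt0 ltnS; exact: rank_leq_col.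
have [i hi|] := pickP (fun i => row i (kermx M) != 0); last first.
  move=> h0; case/negP; apply/eqP/row_matrixP => i; rewrite row0.
  by apply/eqP; move/negbT: (h0 i); rewrite negbK.
move=> _; set u := row i (kermx M).
have uM : u *m M = 0 by rewrite /u -row_mul mulmx_ker row0.
exists (\sum_(j < m.+1) u 0 j *: e j); split.
  apply: contra hi => /eqP h; apply/eqP/matrixP => a j.
  by rewrite (ord1 a) [RHS]mxE; exact: (hind _ (fun j => u 0 j) h j).
move=> z zin; have := index_mem z zs; rewrite zin => hz.
rewrite -(nth_index 0 zin) psum1.
transitivity ((u *m M) 0 (Ordinal hz)); last by rewrite uM mxE.

by rewrite mxE; apply: eq_bigr => j _; rewrite pZ1 /M !mxE.
Qed.
End Basic.
Arguments pD1 {K V Vs p} hp.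
Arguments p01 {K V Vs p} hp.
Arguments pZ1 {K V Vs p} hp.
Arguments pN1 {K V Vs p} hp.
Arguments pB1 {K V Vs p} hp.
Arguments psum1 {K V Vs p} hp.
Arguments pD2 {K V Vs p} hp.
Arguments p02 {K V Vs p} hp.
Arguments pZ2 {K V Vs p} hp.
Arguments pN2 {K V Vs p} hp.
Arguments pB2 {K V Vs p} hp.
Arguments psum2 {K V Vs p} hp.
Arguments kernel_exists {K V Vs p} hp {e}.

Lemma ffB (R : finType) (K : numFieldType) (U : lmodType K) (f g : {ffun R -> U}) x :
  (f - g) x = f x - g x.
Proof. by rewrite !ffunE. Qed.
Lemma ffZ (R : finType) (K : numFieldType) (U : lmodType K) (a : K) (f : {ffun R -> U}) x :
  (a *: f) x = a *: f x.
Proof. by rewrite ffunE. Qed.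

Section Central.
Variable K : numFieldType.
Variables (V Vs : lmodType K) (p : V -> Vs -> K).
Hypothesis hp : bilinear_pairing p.
Hypothesis hnd : nondeg_pairing p.
Variable e : nat -> V.
Hypothesis he : nat_basis e.

Lemma central_sl (Y : V -> V) (zs : seq Vs) :
  (forall a, (forall z, z \in zs -> p a z = 0) -> Y a = 0) ->
  (forall A, in_sl p A -> forall x, Y (A x) = A (Y x)) -> forall x, Y x = 0.
Proof.
move=> hY0 hC x; apply: hnd.1 => al.
have [a [an0 ha]] := kernel_exists hp he (al :: zs).
have hA : in_sl p (fun x => p x al *: a).
  exists 1%N, (fun _ => a), (fun _ => al); split; last by rewrite big_ord1 ha ?mem_head.
  by move=> y; rewrite /tensor_op big_ord1.
have := hC _ hA x; rewrite hY0; last first.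
  by move=> z hz; rewrite (pZ1 hp) ha ?mulr0 // inE hz orbT.
move/esym/eqP; rewrite scaler_eq0 (negbTE an0) orbF => /eqP //.
Qed.
End Central.

Lemma sum_enum (T : finType) (U : nmodType) (F : T -> U) :
  \sum_(i < #|T|) F (enum_val i) = \sum_t F t.
Proof.
rewrite (reindex (@enum_rank T)) /=; last first.
  by exists enum_val => i _; [rewrite enum_rankK | rewrite enum_valK].
by apply: eq_bigr => t _; rewrite enum_rankK.
Qed.

Lemma zmod_aux (U : zmodType) (a c d e : U) : a + d = c - e -> a - c - - (d + e) = 0.
Proof.
by move=> h; rewrite opprK addrA (addrAC a) h (addrAC c) subrr add0r addNr.
Qed.

Definition in_skew (K : numFieldType) (V : lmodType K) (b : V -> V -> K) (eps : K)
  (A : V -> V) : Prop :=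
  exists k (vs ws : 'I_k -> V),
    forall x, A x = \sum_(i < k) (b x (ws i) *: vs i - (eps * b x (vs i)) *: ws i).

Arguments in_skew {K V}.

Section Skew.
Variable K : numFieldType.
Variables (V : lmodType K) (b : V -> V -> K).
Hypothesis hb : bilinear_pairing b.
Hypothesis hnd : nondeg_pairing b.
Variable eps : K.
Hypothesis heps : eps * eps = 1.
Hypothesis hsym : forall x y, b x y = eps * b y x.
Variable e : nat -> V.
Hypothesis he : nat_basis e.

Lemma central_skew (Y : V -> V) (zs : seq V) :
  (forall a, (forall z, z \in zs -> b a z = 0) -> Y a = 0) ->
  (forall A, in_skew b eps A -> forall x, Y (A x) = A (Y x)) -> forall x, Y x = 0.
Proof.
move=> hY0 hC x; apply: hnd.1 => c.
have [a [an0 ha]] := kernel_exists hb he (x :: Y x :: zs).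
have hA : in_skew b eps (fun y => b y c *: a - (eps * b y a) *: c).
  by exists 1%N, (fun _ => a), (fun _ => c) => y; rewrite big_ord1.
have := hC _ hA x.
rewrite (hsym x a) (hsym (Y x) a) (ha x) ?mem_head // (ha (Y x)); last first.
  by rewrite inE mem_head orbT.
rewrite !mulr0 scale0r !subr0 hY0; last first.
  by move=> z hz; rewrite (pZ1 hb) ha ?mulr0 // !inE hz !orbT.
move/esym/eqP; rewrite scaler_eq0 (negbTE an0) orbF => /eqP //.
Qed.

Lemma skew_adj A : in_skew b eps A -> forall x y, b (A x) y = - b x (A y).
Proof.
move=> [k [vs [ws hA]]] x y; rewrite !hA (psum1 hb) (psum2 hb) -sumrN.
apply: eq_bigr => i _; rewrite (pB1 hb) (pB2 hb) !(pZ1 hb) !(pZ2 hb).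
rewrite (hsym y (ws i)) (hsym y (vs i)) mulrA heps mul1r opprB.
by congr (_ - _); [exact: mulrC | rewrite mulrAC].
Qed.

Lemma skew_of_adj (T : finType) (Y : V -> V) (vs ws : T -> V) :
  (forall x, Y x = \sum_t b x (ws t) *: vs t) ->
  (forall x y, b (Y x) y = - b x (Y y)) -> in_skew b eps Y.
Proof.
move=> hY hadj.
pose Ys x := \sum_t (eps * b x (vs t)) *: ws t.
have hYs x y : b (Ys x) y = b x (Y y).
  rewrite hY (psum1 hb) (psum2 hb); apply: eq_bigr => t _.
  by rewrite (pZ1 hb) (pZ2 hb) (hsym y (ws t)) mulrAC.
have hS x : Ys x = - Y x.
  apply/eqP; rewrite -addr_eq0; apply/eqP; apply: hnd.1 => y.
  by rewrite (pD1 hb) hYs hadj addrN.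
exists #|T|, (fun i => 2^-1 *: vs (enum_val i)), (fun i => ws (enum_val i)) => x.
transitivity (2^-1 *: \sum_(i < #|T|) (b x (ws (enum_val i)) *: vs (enum_val i)
   - (eps * b x (vs (enum_val i))) *: ws (enum_val i))); last first.
  rewrite scaler_sumr; apply: eq_bigr => i _.
  rewrite scalerBr !scalerA (pZ2 hb); congr (_ - _); first by rewrite mulrC.
  by rewrite mulrCA.
rewrite sumrB (@sum_enum _ _ (fun t => b x (ws t) *: vs t))
  (@sum_enum _ _ (fun t => (eps * b x (vs t)) *: ws t)) -hY -/(Ys x) hS opprK.
by rewrite -mulr2n -scaler_nat scalerA mulVf ?scale1r // pnatr_eq0.
Qed.

Lemma skew_norm k (Y : V -> V) (vs ws : 'I_k -> V) :
  (forall x, Y x = \sum_(i < k) b x (ws i) *: vs i) ->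
  (forall A, in_skew b eps A -> exists B, in_skew b eps B /\
      forall v, Y (A v) - A (Y v) = B v) ->
  in_skew b eps Y.
Proof.
move=> hY hN.
pose Ys x := \sum_i (eps * b x (vs i)) *: ws i.
have hYs x y : b (Ys x) y = b x (Y y).
  rewrite hY (psum1 hb) (psum2 hb); apply: eq_bigr => t _.
  by rewrite (pZ1 hb) (pZ2 hb) (hsym y (ws t)) mulrAC.
pose zs := [seq ws i | i <- enum 'I_k] ++ [seq vs i | i <- enum 'I_k].
have memw i : ws i \in zs by rewrite mem_cat map_f // mem_enum.
have memv i : vs i \in zs by rewrite mem_cat orbC map_f // mem_enum.
have hS0 : forall x, Y x + Ys x = 0.
  apply: (central_skew _ zs).
    move=> a ha; rewrite hY /Ys !big1 ?addr0 // => i _.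
      by rewrite (ha (vs i)) ?mulr0 ?scale0r.
    by rewrite (ha (ws i)) ?scale0r.
  move=> A hA x; apply/eqP; rewrite -subr_eq0; apply/eqP; apply: hnd.1 => y.
  have [B [hB hBx]] := hN A hA.
  have key : b (Y (A x)) y + b (Y x) (A y) = b x (A (Y y)) - b x (Y (A y)).
    rewrite -(opprK (b (Y x) (A y))) -(skew_adj _ hA) -(pB1 hb) hBx (skew_adj _ hB).
    by rewrite -hBx (pB2 hb) opprB.
  rewrite (pB1 hb) (pD1 hb) hYs (skew_adj _ hA x (Y y)) (skew_adj _ hA (Y x + Ys x) y).
  by rewrite (pD1 hb) hYs; apply: zmod_aux.
have hadj x y : b (Y x) y = - b x (Y y).
  have -> : Y x = - Ys x by apply/eqP; rewrite -addr_eq0 hS0.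
  by rewrite (pN1 hb) hYs.
exact: (skew_of_adj _ _ _ _ hY hadj).
Qed.
End Skew.

Definition Xb (K : numFieldType) (V Vs : lmodType K) (p : V -> Vs -> K) n k
  (vs : 'I_k -> {ffun 'I_n -> V}) (ws : 'I_k -> {ffun 'I_n -> Vs}) (l m : 'I_n) (v : V) : V :=
  \sum_(i < k) p v (ws i m) *: vs i l.

Arguments Xb {K V Vs} p {n k}.

Section Fwd.
Variable K : numFieldType.
Variables (V Vs : lmodType K) (p : V -> Vs -> K).
Hypothesis hp : bilinear_pairing p.
Variable n : nat.
Variable P : (V -> V) -> Prop.
Hypothesis hPadd : forall A, P A -> forall x y, A (x - y) = A x - A y.
Hypothesis hCP : forall (Y : V -> V) (zs : seq Vs),
  (forall a, (forall z, z \in zs -> p a z = 0) -> Y a = 0) ->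
  (forall A, P A -> forall x, Y (A x) = A (Y x)) -> forall x, Y x = 0.

Lemma forward_generic (o : 'I_n) X k (vs : 'I_k -> {ffun 'I_n -> V}) ws :
  (forall x, X x = tensor_op (pairingW n p) vs ws x) -> normalizes n P X ->
  (forall A, P A -> exists B, P B /\ forall v, Xb p vs ws o o (A v) - A (Xb p vs ws o o v) = B v)
  /\ forall x, X x = diag_op n (Xb p vs ws o o) x.
Proof.
move=> hX hN.
have F1 x l : X x l = \sum_m Xb p vs ws l m (x m).
  rewrite hX /tensor_op sum_ffunE /Xb exchange_big; apply: eq_bigr => i _.
  by rewrite ffZ /pairingW scaler_suml.
have Xb0 l m : Xb p vs ws l m 0 = 0.
  by rewrite /Xb big1 // => i _; rewrite (p01 hp) scale0r.
have F1' (y : {ffun 'I_n -> V}) l m : (forall j, j != m -> y j = 0) -> X y l = Xb p vs ws l m (y m).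
  move=> hy; rewrite F1 (bigD1 m) //= big1 ?addr0 // => j hj.
  by rewrite hy // Xb0.
have hPz A : P A -> A 0 = 0.
  by move=> hA; have := hPadd A hA 0 0; rewrite subr0 subrr.
pose em m (v : V) : {ffun 'I_n -> V} := [ffun j => if j == m then v else 0].
have F2 A : P A -> exists B, P B /\ forall l m v,
    Xb p vs ws l m (A v) - A (Xb p vs ws l m v) = if l == m then B v else 0.
  move=> hA; have [B [hB hBx]] := hN A hA; exists B; split => // l m v.
  have := congr1 (fun f : {ffun 'I_n -> V} => f l) (hBx (em m v)).
  rewrite /lie_br ffB /diag_op !ffunE.
  rewrite (F1' _ l m); last by move=> j hj; rewrite !ffunE (negbTE hj) hPz.
  rewrite (F1' (em m v) l m); last by move=> j hj; rewrite !ffunE (negbTE hj).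
  rewrite !ffunE eqxx => ->.
  by case: eqP => _ //; rewrite hPz.
pose zs m := [seq ws i m | i <- enum 'I_k].
have memz i m : ws i m \in zs m by apply: (map_f (fun j => ws j m)); rewrite mem_enum.
have F3 l m : l != m -> forall v, Xb p vs ws l m v = 0.
  move=> hlm; apply: (hCP _ (zs m)).
    by move=> a ha; rewrite /Xb big1 // => i _; rewrite ha ?scale0r.
  move=> A hA x; have [B [_ hBx]] := F2 A hA.
  by have := hBx l m x; rewrite (negbTE hlm) => /subr0_eq.
have F4 l m v : Xb p vs ws l l v = Xb p vs ws m m v.
  apply/subr0_eq; apply: (hCP (fun v => Xb p vs ws l l v - Xb p vs ws m m v) (zs l ++ zs m)).
    move=> a ha; rewrite /Xb !big1 ?subr0 // => i _; rewrite ha ?scale0r //.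
      by rewrite mem_cat memz orbT.
    by rewrite mem_cat memz.
  move=> A hA x; have [B [_ hBx]] := F2 A hA.
  rewrite hPadd //.
  move/eqP: (hBx l l x); rewrite eqxx subr_eq => /eqP ->.
  move/eqP: (hBx m m x); rewrite eqxx subr_eq => /eqP ->.
  by rewrite opprD addrACA subrr add0r.
split.
  move=> A hA; have [B [hB hBx]] := F2 A hA; exists B; split => // v.
  by have := hBx o o v; rewrite eqxx.
move=> x; apply/ffunP => l; rewrite ffunE F1 (bigD1 l) //= big1 ?addr0.
  exact: F4.
by move=> j hj; apply: F3; rewrite eq_sym.
Qed.
End Fwd.

Lemma sum_pair (I J : finType) (U : nmodType) (F : I * J -> U) :
  \sum_q F q = \sum_i \sum_j F (i, j).
Proof. by rewrite pair_bigA; apply: eq_bigr => -[]. Qed.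

Section Frep.
Variable K : numFieldType.
Variables (V Vs : lmodType K) (p : V -> Vs -> K).
Hypothesis hp : bilinear_pairing p.

Lemma gl_of_frep (T : finType) (A : V -> V) (vs : T -> V) (ws : T -> Vs) :
  (forall x, A x = \sum_t p x (ws t) *: vs t) -> in_gl p A.
Proof.
move=> hA; exists #|T|, (fun i => vs (enum_val i)), (fun i => ws (enum_val i)) => x.
by rewrite hA /tensor_op (@sum_enum _ _ (fun t => p x (ws t) *: vs t)).
Qed.

Lemma sl_of_frep (T : finType) (A : V -> V) (vs : T -> V) (ws : T -> Vs) :
  (forall x, A x = \sum_t p x (ws t) *: vs t) -> \sum_t p (vs t) (ws t) = 0 ->
  in_sl p A.
Proof.
move=> hA htr; exists #|T|, (fun i => vs (enum_val i)), (fun i => ws (enum_val i)).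
split; last by rewrite (@sum_enum _ _ (fun t => p (vs t) (ws t))).
by move=> x; rewrite hA /tensor_op (@sum_enum _ _ (fun t => p x (ws t) *: vs t)).
Qed.

Lemma frep_sub (T : finType) (A : V -> V) (vs : T -> V) (ws : T -> Vs) :
  (forall x, A x = \sum_t p x (ws t) *: vs t) -> forall x y, A (x - y) = A x - A y.
Proof.
move=> hA x y; rewrite !hA -sumrB; apply: eq_bigr => t _.
by rewrite (pB1 hp) scalerBl.
Qed.

Lemma comm_frep (T1 T2 : finType) (C A : V -> V) (vs1 : T1 -> V) (ws1 : T1 -> Vs)
  (vs2 : T2 -> V) (ws2 : T2 -> Vs) :
  (forall x, C x = \sum_t p x (ws1 t) *: vs1 t) ->
  (forall x, A x = \sum_t p x (ws2 t) *: vs2 t) ->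
  (forall x, lie_br C A x = \sum_(q : T1 * T2 * bool)
     p x (if q.2 then ws2 q.1.2 else ws1 q.1.1) *:
       (if q.2 then p (vs2 q.1.2) (ws1 q.1.1) *: vs1 q.1.1
        else - (p (vs1 q.1.1) (ws2 q.1.2) *: vs2 q.1.2)))
  /\ \sum_(q : T1 * T2 * bool)
     p (if q.2 then p (vs2 q.1.2) (ws1 q.1.1) *: vs1 q.1.1
        else - (p (vs1 q.1.1) (ws2 q.1.2) *: vs2 q.1.2))
       (if q.2 then ws2 q.1.2 else ws1 q.1.1) = 0.
Proof.
move=> hC hA; split.
  move=> x.
  have E1 : C (A x) = \sum_t1 \sum_t2 p x (ws2 t2) *: (p (vs2 t2) (ws1 t1) *: vs1 t1).
    rewrite hC; apply: eq_bigr => t1 _; rewrite hA (psum1 hp) scaler_suml.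
    by apply: eq_bigr => t2 _; rewrite (pZ1 hp) scalerA.
  have E2 : A (C x) = \sum_t1 \sum_t2 p x (ws1 t1) *: (p (vs1 t1) (ws2 t2) *: vs2 t2).
    rewrite hA [RHS]exchange_big; apply: eq_bigr => t2 _; rewrite hC (psum1 hp) scaler_suml.
    by apply: eq_bigr => t1 _; rewrite (pZ1 hp) scalerA.
  rewrite /lie_br E1 E2 -sumrB [RHS]sum_pair [RHS]sum_pair; apply eq_bigr => t1 _.
  rewrite -sumrB; apply eq_bigr => t2 _; rewrite big_bool /=.
  by rewrite scalerN.
rewrite sum_pair big1 // => -[t1 t2] _; rewrite big_bool /=.
by rewrite (pN1 hp) !(pZ1 hp) mulrC subrr.
Qed.

Lemma diag_frep n (T : finType) (C : V -> V) (vs : T -> V) (ws : T -> Vs) :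
  (forall x, C x = \sum_t p x (ws t) *: vs t) ->
  forall x, diag_op n C x = \sum_(q : 'I_n * T)
     pairingW n p x [ffun j => if j == q.1 then ws q.2 else 0] *:
       [ffun j => if j == q.1 then vs q.2 else 0].
Proof.
move=> hC x; apply/ffunP => l; rewrite ffunE hC sum_ffunE sum_pair (bigD1 l) //=.
rewrite [X in _ = _ + X]big1 ?addr0.
  apply eq_bigr => t _; rewrite ffZ ffunE eqxx; congr (_ *: _).
  rewrite /pairingW (bigD1 l) //= ffunE eqxx big1 ?addr0 // => j hj.
  by rewrite ffunE (negbTE hj) (p02 hp).
move=> i hi; apply: big1 => t _.
by rewrite ffZ ffunE eq_sym (negbTE hi) scaler0.
Qed.
End Frep.
Arguments gl_of_frep {K V Vs p T A vs ws}.
Arguments sl_of_frep {K V Vs p T A vs ws}.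
Arguments frep_sub {K V Vs p} hp {T A vs ws}.
Arguments comm_frep {K V Vs p} hp {T1 T2 C A vs1 ws1 vs2 ws2}.
Arguments diag_frep {K V Vs p} hp n {T C vs ws}.

Section Skew2.
Variable K : numFieldType.
Variables (V : lmodType K) (b : V -> V -> K).
Hypothesis hb : bilinear_pairing b.
Hypothesis hnd : nondeg_pairing b.
Variable eps : K.
Hypothesis heps : eps * eps = 1.
Hypothesis hsym : forall x y, b x y = eps * b y x.

Lemma skew_frep A : in_skew b eps A -> exists (T : finType) (vs ws : T -> V),
  forall x, A x = \sum_t b x (ws t) *: vs t.
Proof.
move=> [k [vs [ws hA]]].
exists (('I_k * bool)%type : finType).
exists (fun q => if q.2 then vs q.1 else (- eps) *: ws q.1).
exists (fun q => if q.2 then ws q.1 else vs q.1) => x.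
rewrite hA sum_pair; apply eq_bigr => i _; rewrite big_bool /=.
by rewrite scalerA mulrN scaleNr (mulrC (b x (vs i))).
Qed.

Lemma skew_sub A : in_skew b eps A -> forall x y, A (x - y) = A x - A y.
Proof. by move=> /skew_frep [T [vs [ws hA]]]; apply: (frep_sub hb hA). Qed.

Lemma skew_comm C A : in_skew b eps C -> in_skew b eps A -> in_skew b eps (lie_br C A).
Proof.
move=> hC hA.
have [T1 [vs1 [ws1 h1]]] := skew_frep _ hC.
have [T2 [vs2 [ws2 h2]]] := skew_frep _ hA.
have [hf _] := comm_frep hb h1 h2.
apply: (@skew_of_adj _ _ _ hb hnd _ hsym _ _ _ _ hf) => x y.
rewrite /lie_br (pB1 hb) (pB2 hb) (@skew_adj _ _ _ hb _ heps hsym _ hC) (@skew_adj _ _ _ hb _ heps hsym _ hA).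
rewrite (@skew_adj _ _ _ hb _ heps hsym _ hA) (@skew_adj _ _ _ hb _ heps hsym _ hC) !opprK opprB.
by [].
Qed.
End Skew2.

Lemma diag_lie (K : numFieldType) (V : lmodType K) n (X : {ffun 'I_n -> V} -> {ffun 'I_n -> V})
  (C A : V -> V) :
  (forall x, X x = diag_op n C x) ->
  forall x, lie_br X (diag_op n A) x = diag_op n (lie_br C A) x.
Proof. by move=> hX x; apply/ffunP => l; rewrite /lie_br ffB !hX !ffunE. Qed.

Lemma normalizes_ext (K : numFieldType) (V : lmodType K) n (P Q : (V -> V) -> Prop) X :
  (forall A, P A <-> Q A) -> (normalizes n P X <-> normalizes n Q X).
Proof.
move=> hPQ; split => hN A hA.
  have [B [hB hBx]] := hN A (proj2 (hPQ A) hA); exists B; split => //; exact/hPQ.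
have [B [hB hBx]] := hN A (proj1 (hPQ A) hA); exists B; split => //; exact/hPQ.
Qed.

Lemma diag_img_ext (K : numFieldType) (V : lmodType K) n (P Q : (V -> V) -> Prop) X :
  (forall A, P A <-> Q A) -> (in_diag_img n P X <-> in_diag_img n Q X).
Proof.
move=> hPQ; split => -[B [hB hBx]]; exists B; split => //; exact/hPQ.
Qed.

Lemma main_gl (K : numFieldType) n (hn : (0 < n)%N) (V Vs : lmodType K)
  (p : V -> Vs -> K) (hp : bilinear_pairing p) (hnd : nondeg_pairing p)
  (hV : countable_dim V) X :
  (in_gl (pairingW n p) X /\ normalizes n (in_sl p) X) <-> in_diag_img n (in_gl p) X.
Proof.
have [e he] := hV; pose o := Ordinal hn.
have slsub A : in_sl p A -> forall x y, A (x - y) = A x - A y.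
  move=> [k [vs [ws [hA _]]]].
  have hA' : forall x, A x = \sum_(i < k) p x (ws i) *: vs i by [].
  exact: (frep_sub hp hA').
split.
  move=> [[k [vs [ws hX]]] hN].
  have [_ hd] := @forward_generic _ _ _ _ hp _ _ slsub (@central_sl _ _ _ _ hp hnd _ he) o _ _ _ _ hX hN.
  exists (Xb p vs ws o o); split => //.
  by exists k, (fun i => vs i o), (fun i => ws i o).
move=> [C [[k [vs [ws hC]]] hX]].
have hC' : forall x, C x = \sum_(i < k) p x (ws i) *: vs i by [].
split.
  apply: (gl_of_frep (T := ('I_n * 'I_k)%type)) => x.
  by rewrite hX; exact: (diag_frep hp n hC').
move=> A [k2 [vs2 [ws2 [hA _]]]].
have hA' : forall x, A x = \sum_(i < k2) p x (ws2 i) *: vs2 i by [].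
have [hf htr] := comm_frep hp hC' hA'.
exists (lie_br C A); split; first exact: (sl_of_frep hf htr).
exact: diag_lie.
Qed.

Lemma main_skew (K : numFieldType) n (hn : (0 < n)%N) (V : lmodType K)
  (b : V -> V -> K) (hb : bilinear_pairing b) (hnd : nondeg_pairing b)
  (eps : K) (heps : eps * eps = 1) (hsym : forall x y, b x y = eps * b y x)
  (hV : countable_dim V) X :
  (in_gl (pairingW n b) X /\ normalizes n (in_skew b eps) X) <->
  in_diag_img n (in_skew b eps) X.
Proof.
have [e he] := hV; pose o := Ordinal hn.
split.
  move=> [[k [vs [ws hX]]] hN].
  have [hn' hd] := @forward_generic _ _ _ _ hb _ _ (@skew_sub _ _ _ hb _)
    (@central_skew _ _ _ hb hnd _ hsym _ he) o _ _ _ _ hX hN.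
  exists (Xb b vs ws o o); split => //.
  exact: (@skew_norm _ _ _ hb hnd _ heps hsym _ he _ _
    (fun i => vs i o) (fun i => ws i o) (fun x => erefl) hn').
move=> [C [hC hX]].
have [T [vs [ws hf]]] := @skew_frep _ _ _ _ _ hC.
split.
  apply: (gl_of_frep (T := ('I_n * T)%type)) => x.
  by rewrite hX; exact: (diag_frep hb n hf).
move=> A hA; exists (lie_br C A); split; first exact: (@skew_comm _ _ _ hb hnd _ heps hsym _ _ hC hA).
exact: diag_lie.
Qed.

Lemma so_skew (K : numFieldType) (V : lmodType K) (b : V -> V -> K) A :
  in_so b A <-> in_skew b 1 A.
Proof.
split=> -[k [vs [ws h]]]; exists k, vs, ws => x; rewrite h;
  by apply: eq_bigr => i _; rewrite mul1r.
Qed.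

Lemma sp_skew (K : numFieldType) (V : lmodType K) (b : V -> V -> K) A :
  in_sp b A <-> in_skew b (-1) A.
Proof.
split=> -[k [vs [ws h]]]; exists k, vs, ws => x; rewrite h;
  by apply: eq_bigr => i _; rewrite mulN1r scaleNr opprK.
Qed.

Theorem lemma2p8 (K : numClosedFieldType) (n : nat) (hn : (0 < n)%N) :
  (forall (V Vs : lmodType K) (p : V -> Vs -> K),
     bilinear_pairing p -> nondeg_pairing p ->
     countable_dim V -> countable_dim Vs ->
     forall X : {ffun 'I_n -> V} -> {ffun 'I_n -> V},
       (in_gl (pairingW n p) X /\ normalizes n (in_sl p) X) <->
       in_diag_img n (in_gl p) X)
  /\
  (forall (V : lmodType K) (b : V -> V -> K),
     bilinear_pairing b -> nondeg_pairing b ->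
     (forall x y, b x y = b y x) -> countable_dim V ->
     forall X : {ffun 'I_n -> V} -> {ffun 'I_n -> V},
       (in_gl (pairingW n b) X /\ normalizes n (in_so b) X) <->
       in_diag_img n (in_so b) X)
  /\
  (forall (V : lmodType K) (b : V -> V -> K),
     bilinear_pairing b -> nondeg_pairing b ->
     (forall x y, b x y = - b y x) -> countable_dim V ->
     forall X : {ffun 'I_n -> V} -> {ffun 'I_n -> V},
       (in_gl (pairingW n b) X /\ normalizes n (in_sp b) X) <->
       in_diag_img n (in_sp b) X).
Proof.
split; first by move=> V Vs p hp hnd hV _ X; exact: main_gl.
split.
  move=> V b hb hnd hsym hV X.
  have e1 := @normalizes_ext _ _ n _ _ X (@so_skew _ _ b).
  have e2 := @diag_img_ext _ _ n _ _ X (@so_skew _ _ b).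
  have := @main_skew _ n hn V b hb hnd 1 (mulr1 1) (fun x y => etrans (hsym x y) (esym (mul1r _))) hV X.
  tauto.
move=> V b hb hnd hsym hV X.
have e1 := @normalizes_ext _ _ n _ _ X (@sp_skew _ _ b).
have e2 := @diag_img_ext _ _ n _ _ X (@sp_skew _ _ b).
have := @main_skew _ n hn V b hb hnd (-1) (etrans (mulrNN 1 1) (mulr1 1))
  (fun x y => etrans (hsym x y) (esym (mulN1r _))) hV X.
tauto.
Qed.
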